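(* Let $N=[n(i,j)]_{1\le i,j\le r}$ be a generalised Cartan matrix, $\mathfrak h$, $\alpha_1,\dots,\alpha_r$, $\mathcal A$, $F:\mathfrak h\to\mathrm{Der}(\mathcal A)$ and invertible $v_1,\dots,v_r\in\mathcal A$ with $F(H)(v_i)=\alpha_i(H)v_i$ for all $H\in\mathfrak h$ be as in the context. Suppose there exist $\delta_1,\dots,\delta_r,\delta_{-1},\dots,\delta_{-r}\in\mathrm{Im}\,F$ such that, with $\mathbf X_i=v_i\delta_i$ and $\mathbf X_{-i}=v_i^{-1}\delta_{-i}$, one has in $\mathrm{Der}(\mathcal A)$ $$[\mathbf X_i,\mathbf X_{-i}]=F(H_i)\quad(1\le i\le r),\qquad [\mathbf X_i,\mathbf X_{-j}]=0\quad(i\neq j).$$ Set $A_{ij}=\alpha_i(\delta_j)$ for $1\le i,j\le r$. Then: (i) $A_{ii}\neq 0$ for $1\le i\le r$; (ii) $\delta_{-i}=\frac{1}{A_{ii}}\bigl(-F(H_i)+\frac{1}{A_{ii}}\delta_i\bigr)$ for $1\le i\le r$; (iii) $\frac{A_{ij}}{A_{jj}}\in\{0,-1\}$ for $i\neq j$; (iv) $\frac{A_{ij}}{A_{jj}}+\frac{A_{ji}}{A_{ii}}=n(j,i)$ for all $i,j$; (v) the matrix $A'=[\frac{A_{ij}}{A_{jj}}]$ has the property that if its $(i,j)$ entry equals $-1$, then the $i$-th row and the $j$-th column of $A'$ contain no other entry equal to $-1$; (vi) if $\frac{A_{ij}}{A_{jj}}=\frac{A_{ji}}{A_{ii}}=-1$,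 then $N$ contains $\begin{pmatrix}2&-2\\-2&2\end{pmatrix}$ as a direct factor, i.e. $n(i,j)=n(j,i)=-2$ and $n(i,k)=n(k,i)=n(j,k)=n(k,j)=0$ for all $k\notin\{i,j\}$, and moreover $F(H_i)+F(H_j)=0$.
   Context: A generalised Cartan matrix is $N=[n(i,j)]_{1\le i,j\le r}$ with $n(i,j)\in\mathbb Z$, $n(i,i)=2$, $n(i,j)\le 0$ for $i\neq j$, and $n(i,j)=0\iff n(j,i)=0$. Let $s$ be the corank of $N$, let $\mathfrak h$ be the (abelian) complex Lie algebra with basis $H_1,\dots,H_{r+s}$, and let $\alpha_1,\dots,\alpha_r\in\mathfrak h^*$ be linearly independent with $\alpha_j(H_i)=n(i,j)$ for $1\le i,j\le r$; put $Z=\bigcap_{i}\ker\alpha_i$. $\mathcal A$ is a complex commutative algebra, $\mathrm{Der}(\mathcal A)$ its Lie algebra of derivations (commutator bracket); for $a\in\mathcal A$, $D\in\mathrm{Der}(\mathcal A)$, $aD$ denotes the derivation $b\mapsto aD(b)$. $F:\mathfrak h\to\mathrm{Der}(\mathcal A)$ is a Lie algebra homomorphism and $v_1,\dots,v_r\in\mathcal A$ are invertible with $F(H)(v_i)=\alpha_i(H)v_i$. Then $\ker F\subseteq Z$, so each $\alpha_i$ induces a well-defined linear form on $\mathrm{Im}\,F$, still denoted $\alpha_i$, via $\alpha_i(F(H))=\alpha_i(H)$. *)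

(* Defs.v *)
From HB Require Import structures.
From mathcomp Require Import all_boot all_order all_algebra.
From mathcomp Require Import complex.
From mathcomp Require Import reals.
Set Implicit Arguments. Unset Strict Implicit. Unset Printing Implicit Defensive.
Import Order.TTheory GRing.Theory Num.Theory.
Local Open Scope ring_scope.

Definition gen_cartan (r : nat) (N : 'M[int]_r) : Prop :=
  [/\ forall i, N i i = 2,
      forall i j, i != j -> N i j <= 0
    & forall i j, N i j = 0 <-> N j i = 0].

Definition is_derivation (C : comNzRingType) (A : comAlgType C) (D : A -> A) : Prop :=
  (forall (c : C) (x y : A), D (c *: x + y) = c *: D x + D y) /\
  (forall x y : A, D (x * y) = x * D y + y * D x).

Definition der_bracket (T : pzRingType) (D E : T -> T) : T -> T :=
  fun x => D (E x) - E (D x).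

Definition der_lmul (T : pzRingType) (a : T) (D : T -> T) : T -> T :=
  fun x => a * D x.

(* h = C^(r+s) with basis H_1..H_(r+s) (row vectors); a linear form
   alpha_j on h is encoded by the j-th column of a matrix al, so that
   alpha_j(H) = (H *m al) 0 j. *)
Definition lin_form (C : pzRingType) (m r : nat) (al : 'M[C]_(m, r)) (j : 'I_r)
  (H : 'rV[C]_m) : C := (H *m al) 0 j.

Definition basisH {C : pzRingType} {m : nat} (i : 'I_m) : 'rV[C]_m :=
  delta_mx 0 i.

(* Main.v *)
Require Import Defs.
From HB Require Import structures.
From mathcomp Require Import all_boot all_order all_algebra.
From mathcomp Require Import complex.
From mathcomp Require Import reals.
From mathcomp Require Import ring zify.
Import Order.TTheory GRing.Theory Num.Theory.
Local Open Scope ring_scope.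

Lemma one_neqN1 (K : numFieldType) : (1 : K) != -1.
Proof. by rewrite -addr_eq0 -[1 + 1]/(2%:R) pnatr_eq0. Qed.

Lemma one_neq0' (K : numFieldType) : (1 : K) != 0.
Proof. exact: oner_neq0. Qed.

Lemma pair_cases (K : numFieldType) (a b n m : K) :
  (a - n) * (b + 1) = 0 -> b * (a - n - 1) = 0 ->
  (b - m) * (a + 1) = 0 -> a * (b - m - 1) = 0 ->
  (a = 0 \/ a = -1) /\ a + b = n.
Proof.
move=> /eqP; rewrite mulf_eq0 subr_eq0 addr_eq0 => /orP [] /eqP h1.
- subst n; rewrite subrr sub0r mulrN1 => /eqP; rewrite oppr_eq0 => /eqP hb.
  subst b; rewrite sub0r addr0 => h3 /eqP; rewrite mulf_eq0 => /orP [/eqP -> | ]; first by auto.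
  rewrite -opprD oppr_eq0 addr_eq0 => /eqP hm; subst m.
  move: h3; rewrite opprK mul1r => /eqP; rewrite addr_eq0 => /eqP ->; auto.
- subst b => /eqP; rewrite mulf_eq0 oppr_eq0 oner_eq0 /= -addrA -opprD subr_eq0 => /eqP ha.
  subst a; split; last by rewrite addrK.
  move: H H0 => h3 /eqP; rewrite mulf_eq0 => /orP [/eqP -> | h]; first by left.
  right; move/eqP: h3; rewrite mulf_eq0 => /orP [/eqP h'|].
    by move: h; rewrite h' sub0r oppr_eq0 oner_eq0.
  by rewrite addr_eq0 => /eqP.
Qed.



Lemma eq0_by (K : pzRingType) (c x y : K) : y = 0 -> x = c * y -> x = 0.
Proof. by move=> -> ->; rewrite mulr0. Qed.

Lemma scal (K : numFieldType) (I : eqType) (p q n : I -> I -> K) :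
 (forall i, n i i = 2) ->
 (forall i k, n i k + p i i * q k i + q i i * p k i = 0) ->
 (forall i j, i != j -> forall k, - p j i * q k j + - q i j * p k i = 0) ->
 [/\ forall i, p i i != 0,
     forall i, q i i = - (p i i)^-1,
     forall k j, q k j = (p k j / p j j - n j k) / p j j,
     (forall i j, i != j -> p i j / p j j = 0 \/ p i j / p j j = -1) &
     (forall i j, p i j / p j j + p j i / p i i = n j i) /\
     (forall i j k, i != j -> p j i / p i i * (p k j / p j j - n j k - p k i / p i i) = 0)].
Proof.
move=> hn K1 K2.
have pq i : p i i * q i i = -1.
  have := K1 i i; rewrite hn (mulrC (q i i)) => h.
  have h2 : 2 * (p i i * q i i + 1) = 0.
    apply: (@eq0_by K 1 _ _ h). ring.
  move: h2.
  move/eqP; rewrite mulf_eq0 pnatr_eq0 /= addr_eq0; exact/eqP.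
have pnz i : p i i != 0.
  apply/negP => /eqP h0; move: (pq i); rewrite h0 mul0r => /eqP.
  by rewrite eq_sym oppr_eq0 oner_eq0.
have qii i : q i i = - (p i i)^-1.
  by apply: (mulfI (pnz i)); rewrite pq mulrN mulfV.
have qform k j : q k j = (p k j / p j j - n j k) / p j j.
  have h := K1 j k; rewrite qii in h.
  apply/eqP; rewrite -subr_eq0; apply/eqP.
  apply: (@eq0_by K (p j j)^-1 _ _ h); field; exact: pnz.
pose a i j := p i j / p j j.
have aii i : a i i = 1 by rewrite /a divff.
have Egen i j k : i != j -> a j i * (a k j - n j k) + (a i j - n j i) * a k i = 0.
  move=> ij; have h := K2 i j ij k; rewrite !qform in h.
  have := pnz i; have := pnz j => hj hi.
  apply: (@eq0_by K (- p j j / p i i) _ _ h); rewrite /a; field; rewrite hi hj //.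
have pc i j : i != j -> (a i j = 0 \/ a i j = -1) /\ a i j + a j i = n j i.
  move=> ij; have ji : j != i by rewrite eq_sym.
  apply: (@pair_cases K _ _ _ (n i j)).
  - have := Egen i j i ij; rewrite aii => h; apply: (@eq0_by K 1 _ _ h); ring.
  - have := Egen i j j ij; rewrite aii hn => h; apply: (@eq0_by K 1 _ _ h); ring.
  - have := Egen j i j ji; rewrite aii => h; apply: (@eq0_by K 1 _ _ h); ring.
  - have := Egen j i i ji; rewrite aii hn => h; apply: (@eq0_by K 1 _ _ h); ring.
have iv i j : a i j + a j i = n j i.
  have [-> | ij] := eqVneq i j; last by case: (pc i j ij).
  by rewrite aii hn.
split=> //.
- by move=> i j ij; case: (pc i j ij).
split=> // i j k ij.
have h := Egen i j k ij; rewrite -(iv i j) in h.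
apply: (@eq0_by K 1 _ _ h); rewrite /a; ring.
Qed.



Lemma eq0_by2 (K : pzRingType) (c d x y z : K) : y = 0 -> z = 0 -> x = c * y + d * z -> x = 0.
Proof. by move=> -> -> ->; rewrite !mulr0 addr0. Qed.

Lemma scal2 (K : numFieldType) (I : eqType) (a n : I -> I -> K) :
 (forall i, a i i = 1) ->
 (forall i j, i != j -> a i j = 0 \/ a i j = -1) ->
 (forall i j, a i j + a j i = n j i) ->
 (forall i j k, i != j -> a j i * (a k j - n j k - a k i) = 0) ->
 (forall i j, a i j = -1 -> (forall k, k != j -> a i k != -1) /\ (forall k, k != i -> a k j != -1)) /\
 (forall i j, a i j = -1 -> a j i = -1 ->
    [/\ i != j, n j i = -2, n i j = -2 & forall k, k != i -> k != j -> n i k + n j k = 0]).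
Proof.
move=> aii iii iv E.
have ne i j : a i j = -1 -> i != j.
  move=> h; apply/eqP => e; subst j; move: h; rewrite aii => /eqP.
  by rewrite (negbTE (one_neqN1 _)).
have notm1 j k : j != k -> a j k = 1 -> False.
  move=> jk h; case: (iii j k jk); rewrite h => /eqP.
    by rewrite oner_eq0.
  by rewrite (negbTE (one_neqN1 _)).
split.
  move=> i j hij; split => k kj; apply/eqP => hk.
  - have ik := ne i k hk.
    have h := E k i j (ltac:(by rewrite eq_sym)); rewrite -(iv j i) hk hij in h.
    apply: (notm1 j k); first by rewrite eq_sym.
    apply/eqP; rewrite -subr_eq0; apply/eqP.
    apply: (@eq0_by K 1 _ _ h); ring.
  - have kj' := ne k j hk.
    have ji : j != i by rewrite eq_sym (ne i j hij).
    have h := E j k i (ltac:(by rewrite eq_sym)); rewrite -(iv i k) hk hij in h.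
    apply: (notm1 k i) => //.
    apply/eqP; rewrite -subr_eq0; apply/eqP.
    apply: (@eq0_by K 1 _ _ h); ring.
move=> i j hij hji; have ij := ne i j hij; have ji : j != i by rewrite eq_sym.
split=> //.
- rewrite -(iv i j) hij hji; ring.
- rewrite -(iv j i) hij hji; ring.
move=> k ki kj.
have h1 := E j i k ji; have h2 := E i j k ij.
rewrite hij in h1; rewrite hji in h2.
apply: (@eq0_by2 K 1 1 _ _ _ h1 h2); ring.
Qed.



Definition sc (C : comNzRingType) (A : comAlgType C) (a : C) : A := a%:A.
Arguments sc {C A}.
Lemma scE (C : comNzRingType) (A : comAlgType C) (a : C) (x : A) : a *: x = (sc a : A) * x.
Proof. by rewrite /sc mulr_algl. Qed.

Theorem theorem3p5 (R : realType) (r s : nat) (N : 'M[int]_r)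
  (al : 'M[complex R]_(r + s, r))
  (A : comAlgType (complex R))
  (F : 'rV[complex R]_(r + s) -> A -> A)
  (v vinv : 'I_r -> A)
  (Gp Gm : 'I_r -> 'rV[complex R]_(r + s)) :
  gen_cartan N ->
  s = (r - \rank (map_mx (fun z : int => z%:~R : complex R) N))%N ->
  row_free al^T ->
  (forall i j : 'I_r, lin_form al j (basisH (lshift s i)) = (N i j)%:~R) ->
  (forall (c : complex R) (H H' : 'rV[complex R]_(r + s)) (x : A),
      F (c *: H + H') x = c *: F H x + F H' x) ->
  (forall H, is_derivation (F H)) ->
  (forall H H' (x : A), der_bracket (F H) (F H') x = F 0 x) ->
  (forall i, v i * vinv i = 1) ->
  (forall H i, F H (v i) = lin_form al i H *: v i) ->
  let delta_p i := F (Gp i) in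
  let delta_m i := F (Gm i) in
  let X_p i := der_lmul (v i) (delta_p i) in
  let X_m i := der_lmul (vinv i) (delta_m i) in
  (forall i x, der_bracket (X_p i) (X_m i) x = F (basisH (lshift s i)) x) ->
  (forall i j, i != j -> forall x, der_bracket (X_p i) (X_m j) x = 0) ->
  let Am i j := lin_form al i (Gp j) in
  let A' i j := Am i j / Am j j in
  [/\ (forall i, Am i i != 0),
      (forall i (x : A), delta_m i x =
         (Am i i)^-1 *: (- F (basisH (lshift s i)) x + (Am i i)^-1 *: delta_p i x)),
      ((forall i j, i != j -> A' i j = 0 \/ A' i j = -1) /\
       (forall i j, A' i j + A' j i = (N j i)%:~R)),
      (forall i j, A' i j = -1 ->
         (forall k, k != j -> A' i k != -1) /\ (forall k, k != i -> A' k j != -1))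
    & (forall i j, A' i j = -1 -> A' j i = -1 ->
         [/\ N i j = -2, N j i = -2,
             (forall k, k != i -> k != j ->
                [/\ N i k = 0, N k i = 0, N j k = 0 & N k j = 0])
           & forall x : A, F (basisH (lshift s i)) x + F (basisH (lshift s j)) x = 0])].
Proof.
move=> hcart _ _ hal Flin Fder Fbr hv Fv dp dm Xp Xm hb1 hb2 Am A'.
have F0 x : F 0 x = 0.
  have := Flin 1 0 0 x; rewrite !scale1r !addr0 => h.
  by apply: (@addrI _ (F 0 x)); rewrite addr0 -h.
have FZ c H x : F (c *: H) x = c *: F H x.
  by have := Flin c H 0 x; rewrite addr0 F0 addr0.
have Fcomm H H' x : F H (F H' x) = F H' (F H x).
  by have := Fbr H H' x; rewrite /der_bracket F0 => /eqP; rewrite subr_eq0 => /eqP.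
have DM H x y : F H (x * y) = x * F H y + y * F H x := (Fder H).2 x y.
have D1 H : F H 1 = 0.
  have := DM H 1 1; rewrite !mul1r => h.
  by apply: (@addrI _ (F H 1)); rewrite addr0 -h.
have vinvv i : vinv i * v i = 1 by rewrite mulrC hv.
have Fvinv H i : F H (vinv i) = - (lin_form al i H *: vinv i).
  have := DM H (v i) (vinv i); rewrite hv D1 Fv !scE => /esym h.
  apply/eqP; rewrite -subr_eq0 opprK; apply/eqP.
  rewrite -[LHS]mulr1 -(hv i).
  apply: (@eq0_by A (vinv i) _ _ h); ring.
have brk i j x : der_bracket (Xp i) (Xm j) x = v i * vinv j *
    (- (lin_form al j (Gp i) *: F (Gm j) x) - lin_form al i (Gm j) *: F (Gp i) x).
  rewrite /der_bracket /Xp /Xm /der_lmul /dp /dm !DM Fvinv Fv (Fcomm (Gm j) (Gp i)).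
  rewrite !scE; ring.
have eq1 i x : F (basisH (lshift s i)) x =
    - (lin_form al i (Gp i) *: F (Gm i) x) - lin_form al i (Gm i) *: F (Gp i) x.
  by rewrite -hb1 brk hv mul1r.
have eq2 i j : i != j -> forall x,
    - (lin_form al j (Gp i) *: F (Gm j) x) - lin_form al i (Gm j) *: F (Gp i) x = 0.
  move=> ij x; have := hb2 i j ij x; rewrite brk => h.
  have e : v j * vinv i * (v i * vinv j) = 1.
    by transitivity ((v i * vinv i) * (v j * vinv j)); [ring | rewrite !hv mulr1].
  by rewrite -[LHS]mul1r -e -(mulrA (v j * vinv i)) h mulr0.
have lf c H H' k : lin_form al k (c *: H + H') = c * lin_form al k H + lin_form al k H'.
  by rewrite /lin_form mulmxDl -scalemxAl !mxE.
have lfZ c H k : lin_form al k (c *: H) = c * lin_form al k H.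
  by rewrite /lin_form -scalemxAl !mxE.
have Ker K : (forall x, F K x = 0) -> forall k, lin_form al k K = 0.
  move=> hK k; case: (eqVneq (lin_form al k K) 0) => // nz; exfalso.
  have := Fv K k; rewrite hK => /esym/eqP; rewrite scaler_eq0 (negbTE nz) /= => /eqP vk0.
  by have := hv k; rewrite vk0 mul0r => /eqP; rewrite eq_sym oner_eq0.
have K1 i k : (N i k)%:~R + lin_form al i (Gp i) * lin_form al k (Gm i)
    + lin_form al i (Gm i) * lin_form al k (Gp i) = 0.
  have hK : forall x, F (lin_form al i (Gp i) *: Gm i +
      (lin_form al i (Gm i) *: Gp i + basisH (lshift s i))) x = 0.
    by move=> x; rewrite Flin Flin eq1 !scE; ring.
  have := Ker _ hK k; rewrite !lf hal => h.
  apply: (@eq0_by _ 1 _ _ h); ring.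
have K2 i j : i != j -> forall k, - lin_form al j (Gp i) * lin_form al k (Gm j)
    + - lin_form al i (Gm j) * lin_form al k (Gp i) = 0.
  move=> ij k.
  have hK : forall x, F ((- lin_form al j (Gp i)) *: Gm j +
      (- lin_form al i (Gm j)) *: Gp i) x = 0.
    by move=> x; rewrite Flin FZ !scaleNr; exact: eq2.
  by have := Ker _ hK k; rewrite lf lfZ.
have hn i : ((N i i)%:~R : complex R) = 2.
  by case: hcart => hN _ _; rewrite hN.
case: (@scal _ _ (fun i j => lin_form al i (Gp j)) (fun i j => lin_form al i (Gm j))
   (fun i j => (N i j)%:~R) hn K1 K2) => /= pnz qii qform iii [iv E].
have aii i : lin_form al i (Gp i) / lin_form al i (Gp i) = 1 by rewrite divff.
have [rowcol vi] := @scal2 _ _ (fun i j => lin_form al i (Gp j) / lin_form al j (Gp j))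
   (fun i j => (N i j)%:~R) aii iii iv E.
split.
- exact: pnz.
- move=> i x; rewrite /dm /dp /Am eq1 qii.
  rewrite !scaleNr opprK !scE.
  have e : (sc (lin_form al i (Gp i))^-1 : A) * sc (lin_form al i (Gp i)) = 1.
    by rewrite /sc -scalerAl mul1r scalerA mulVf ?scale1r // pnz.
  apply: etrans (_ : _ = (sc (lin_form al i (Gp i))^-1 * sc (lin_form al i (Gp i)))
      * F (Gm i) x) _; first by rewrite e mul1r.
  ring.
- by split; [exact: iii | exact: iv].
- exact: rowcol.
move=> i j hij hji.
have [ij nji nij hk] := vi i j hij hji.
move: nji nij hk => /= nji nij hk.
have ji : j != i by rewrite eq_sym.
case: hcart => _ hle hiff.
split.
- by apply: (@intr_inj (complex R)); rewrite nij.
- by apply: (@intr_inj (complex R)); rewrite nji.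
- move=> k ki kj.
  have hs : N i k + N j k = 0.
    by apply: (@intr_inj (complex R)); rewrite intrD hk.
  have h1 := hle i k (ltac:(by rewrite eq_sym)).
  have h2 := hle j k (ltac:(by rewrite eq_sym)).
  have e1 : N i k = 0 by lia.
  have e2 : N j k = 0 by lia.
  split=> //; [exact: (hiff i k).1 | exact: (hiff j k).1].
move=> x.
have hij' : lin_form al i (Gp j) / lin_form al j (Gp j) = -1 := hij.
have hji' : lin_form al j (Gp i) / lin_form al i (Gp i) = -1 := hji.
have qij : lin_form al i (Gm j) = (lin_form al j (Gp j))^-1.
  rewrite (qform i j) hij' nji; field; exact: pnz.
have qji : lin_form al j (Gm i) = (lin_form al i (Gp i))^-1.
  rewrite (qform j i) hji' nij; field; exact: pnz.
have pji : lin_form al j (Gp i) = - lin_form al i (Gp i).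
  by rewrite -[LHS](divfK (pnz i)) hji' mulN1r.
have pij : lin_form al i (Gp j) = - lin_form al j (Gp j).
  by rewrite -[LHS](divfK (pnz j)) hij' mulN1r.
have e2ij := eq2 i j ij x; rewrite pji qij scaleNr opprK in e2ij.
have e2ji := eq2 j i ji x; rewrite pij qji scaleNr opprK in e2ji.
move/subr0_eq: e2ij => e2ij; move/subr0_eq: e2ji => e2ji.
have Fmj : F (Gm j) x = ((lin_form al i (Gp i))^-1 * (lin_form al j (Gp j))^-1) *: F (Gp i) x.
  by rewrite -scalerA -e2ij scalerA mulVf ?scale1r // pnz.
have Fmi : F (Gm i) x = ((lin_form al j (Gp j))^-1 * (lin_form al i (Gp i))^-1) *: F (Gp j) x.
  by rewrite -scalerA -e2ji scalerA mulVf ?scale1r // pnz.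
rewrite !eq1 !qii Fmj Fmi !scalerA.
have s1 : lin_form al i (Gp i) * ((lin_form al j (Gp j))^-1 * (lin_form al i (Gp i))^-1)
   = (lin_form al j (Gp j))^-1 by field; rewrite ?pnz.
have s2 : lin_form al j (Gp j) * ((lin_form al i (Gp i))^-1 * (lin_form al j (Gp j))^-1)
   = (lin_form al i (Gp i))^-1 by field; rewrite ?pnz.
rewrite s1 s2 !scaleNr !scE; ring.
Qed.
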